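(* Let $\delta>0$ and positive integers $d',p$. Define $\mathcal N^{RS}_\delta:\mathbb{R}^{d'}\times\mathbb{R}^p\to\mathbb{R}^p$ by $y_k=1+\sum_{j\in[d']}\mathcal N^C_\delta(x_k,x_j)$ for $k\in[d']$ and $\mathcal N^{RS}_\delta(\mathbf{x},\mathbf{r})[i]=\sum_{k\in[d']}\mathcal N^{IFP}(x_k,r_i-y_k)$ for $i\in[p]$. If $\mathbf{x}\in[0,1]^{d'}$ is such that for all $j\ne k$ either $|x_j-x_k|\ge\delta$ or $x_j=x_k=0$, and $\mathbf{r}\in\{1,\dots,d'\}^p$, then the output $\mathbf{x}'=\mathcal N^{RS}_\delta(\mathbf{x},\mathbf{r})$ satisfies $x'_i=\mathcal R_{r_i}(\mathbf{x})$ for all $i\in[p]$. Further, for arbitrary $\mathbf{x}\in\mathbb{R}^{d'}$, $|x'_i|\le d'\|\mathbf{x}\|_\infty$. Moreover, $\mathcal N^{RS}_\delta$ is a ReLU network with 2 hidden layers, width at most $\max(2{d'}^2+2d'+2p,\,4pd')$, and magnitudes of weights bounded by $\frac1\delta$.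
   Context: $\mathcal N^C_\delta(x_1,x_2)=\left[\frac1\delta(x_1-x_2)\right]_+-\left[\frac1\delta(x_1-x_2-\delta)\right]_+$ (comparison network) and $\mathcal N^{IFP}(x,s)=[x+s]_+-[x+s-1]_+-[s]_++[s-1]_+$ (indicator function product network), where $[z]_+=\max\{0,z\}$. $\mathcal R_r(\mathbf{x})$ is the $r$-th entry of $\mathbf{x}$ in ascending sorted order. Width is the number of neurons in the largest hidden layer. *)

(* Defs.v *)
From HB Require Import structures.
From mathcomp Require Import all_boot all_order all_algebra.
Set Implicit Arguments. Unset Strict Implicit. Unset Printing Implicit Defensive.
Import Order.TTheory GRing.Theory Num.Theory.
Local Open Scope ring_scope.

Section Defs.
Variable R : realFieldType.

Definition relu (z : R) : R := Num.max 0 z.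

Definition NC (delta x1 x2 : R) : R :=
  relu ((x1 - x2) / delta) - relu ((x1 - x2 - delta) / delta).

Definition NIFP (x s : R) : R :=
  relu (x + s) - relu (x + s - 1) - relu s + relu (s - 1).

Definition NRS_y (delta : R) (d : nat) (x : 'I_d -> R) (k : 'I_d) : R :=
  1 + \sum_(j < d) NC delta (x k) (x j).

Definition NRS (delta : R) (d p : nat) (x : 'I_d -> R) (r : 'I_p -> R)
  (i : 'I_p) : R :=
  \sum_(k < d) NIFP (x k) (r i - NRS_y delta x k).

(* R_r(x): the r-th entry (1-indexed) of x in ascending sorted order *)
Definition rank_stat (d : nat) (x : 'I_d -> R) (r : nat) : R :=
  nth 0 (sort <=%R [seq x i | i <- enum 'I_d]) r.-1.

Definition sup_norm (d : nat) (x : 'I_d -> R) : R :=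
  \big[Num.max/0]_(i < d) `|x i|.

Definition reluv (n : nat) (v : 'cV[R]_n) : 'cV[R]_n := map_mx relu v.

Definition net2 (n0 n1 n2 n3 : nat)
  (W1 : 'M[R]_(n1, n0)) (b1 : 'cV[R]_n1)
  (W2 : 'M[R]_(n2, n1)) (b2 : 'cV[R]_n2)
  (W3 : 'M[R]_(n3, n2)) (b3 : 'cV[R]_n3) (v : 'cV[R]_n0) : 'cV[R]_n3 :=
  W3 *m reluv (W2 *m reluv (W1 *m v + b1) + b2) + b3.

Definition mx_bounded (m n : nat) (c : R) (A : 'M[R]_(m, n)) : Prop :=
  forall i j, `|A i j| <= c.

Definition net_input (d p : nat) (x : 'I_d -> R) (r : 'I_p -> R)
  : 'cV[R]_(d + p) :=
  col_mx (\col_(j < d) x j) (\col_(j < p) r j).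

End Defs.

(* Main.v *)
Require Import Defs.
From HB Require Import structures.
From mathcomp Require Import all_boot all_order all_algebra.
From mathcomp Require Import ring lra.
From mathcomp Require Import zify.
Import Order.TTheory GRing.Theory Num.Theory.
Local Open Scope ring_scope.

Section H.


Variable R : realFieldType.
Implicit Types (z x s a b delta : R).

Lemma lemA (s : seq R) (m : nat) :
  sorted <=%R s -> (m < size s)%N -> count_mem (nth 0 s m) s = 1%N ->
  count (fun y => y < nth 0 s m) s = m.
Proof.
move=> so ms c1; set v := nth 0 s m.
have Hs : s = take m s ++ v :: drop m.+1 s by rewrite -(drop_nth 0 ms) cat_take_drop.
have sz : size (take m s) = m by rewrite size_take ms.
have le1 : all (fun y => y <= v) (take m s).
  apply/(all_nthP 0) => i; rewrite sz => im; rewrite nth_take //.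
  apply: le_sorted_leq_nth => //; [exact: ltn_trans im ms | exact: ltnW].
have le2 : all (fun y => v <= y) (drop m.+1 s).
  apply/(all_nthP 0) => i; rewrite size_drop => im; rewrite nth_drop.
  apply: le_sorted_leq_nth => //; last by lia. have h : (m.+1 + i < size s)%N by rewrite -ltn_subRL. exact: h.

have c0 : count_mem v (take m s) = 0%N.
  move: c1; rewrite {2}Hs count_cat /= eqxx -/v add1n addnS => -[]; lia.
move/count_memPn: c0 => nv.
rewrite Hs count_cat /= ltxx add0n.
have -> : count (fun y => y < v) (drop m.+1 s) = 0%N.
  apply/eqP; rewrite -leqn0 leqNgt -has_count; apply/hasPn => y hy.
  by rewrite -leNgt (allP le2 y hy).
rewrite addn0 -{2}sz; apply/eqP; rewrite -all_count; apply/allP => y hy.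
rewrite lt_neqAle (allP le1 y hy) andbT; apply/eqP => e; subst y.
by rewrite hy in nv.
Qed.

Lemma relu_pos z : 0 <= z -> relu z = z.
Proof. by move=> h; rewrite /relu max_r. Qed.
Lemma relu_neg z : z <= 0 -> relu z = 0.
Proof. by move=> h; rewrite /relu max_l. Qed.
Lemma relu_ge0 z : 0 <= relu z.
Proof. by rewrite /relu le_max lexx. Qed.

Lemma relu_split z : relu z - relu (- z) = z.
Proof.
case: (lerP 0 z) => h.
  by rewrite relu_pos // relu_neg ?subr0 // oppr_le0.
rewrite relu_neg; last exact: ltW. rewrite relu_pos; first by rewrite sub0r opprK. by rewrite oppr_ge0 ltW.
Qed.

Lemma NC_eval delta a b : 0 < delta -> (a = b \/ delta <= `|a - b|) ->
  NC delta a b = (nat_of_bool (b < a)%R)%:R.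
Proof.
move=> hd [->|h].
  rewrite /NC subrr mul0r relu_pos // !sub0r.
  have -> : (- delta / delta) = -1 by field; rewrite gt_eqF.
  by rewrite relu_neg ?ltxx ?oppr0 // lerN10.
have e : (a - b - delta) / delta = (a - b) / delta - 1.
  by field; rewrite gt_eqF.
rewrite /NC e.
case: (lerP b a) => hab.
  have h1 : delta <= a - b by rewrite ger0_norm ?subr_ge0 in h.
  have h2 : 1 <= (a - b) / delta by rewrite ler_pdivlMr // mul1r.
  rewrite relu_pos; last by lra.
  rewrite relu_pos; last by lra.
  have : b < a by lra.
  by move=> -> /=; rewrite mulr1n; ring.
have h1 : delta <= b - a by rewrite ltr0_norm ?subr_lt0 // opprB in h.
have h2 : (a - b) / delta <= 0 by rewrite ler_pdivrMr // mul0r; lra.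
rewrite relu_neg // relu_neg; last by lra.
by rewrite ltNge (ltW hab) subr0.
Qed.

Lemma NIFP_nat x (m n : nat) : 0 <= x <= 1 ->
  NIFP x (m%:R - n%:R) = if m == n then x else 0.
Proof.
move=> /andP[h0 h1]; rewrite /NIFP.
case: (ltngtP m n) => hmn.
- have : (m.+1%:R <= n%:R :> R) by rewrite ler_nat.
  rewrite -natr1 => hh.
  rewrite !relu_neg; [ring | lra | lra | lra | lra].
- have : (n.+1%:R <= m%:R :> R) by rewrite ler_nat.
  rewrite -natr1 => hh.
  rewrite !relu_pos; [ring | lra | lra | lra | lra].
- rewrite hmn subrr addr0 relu_pos // relu_neg; last by lra.
  rewrite relu_pos // relu_neg; [ring | lra].
Qed.

Lemma relu_cases z : (0 <= z /\ relu z = z) \/ (z <= 0 /\ relu z = 0).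
Proof.
case: (lerP 0 z) => h; [left; split => //; exact: relu_pos | right].
by split; [exact: ltW | apply: relu_neg; exact: ltW].
Qed.

Lemma NIFP_bound x s : `|NIFP x s| <= `|x|.
Proof.
rewrite /NIFP.
have [[h1 ->]|[h1 ->]] := relu_cases (x + s);
have [[h2 ->]|[h2 ->]] := relu_cases (x + s - 1);
have [[h3 ->]|[h3 ->]] := relu_cases s;
have [[h4 ->]|[h4 ->]] := relu_cases (s - 1);
(case: (lerP 0 x) => h5; [rewrite (ger0_norm h5) | rewrite (ltr0_norm h5)]);
rewrite ler_norml; apply/andP; split; lra.
Qed.

Lemma le_supnorm d (x : 'I_d -> R) k : `|x k| <= sup_norm x.
Proof. by rewrite /sup_norm (bigD1 k) //= le_max lexx. Qed.

Lemma NRS_bound delta d p (x : 'I_d -> R) (r : 'I_p -> R) i :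
  `|NRS delta x r i| <= d%:R * sup_norm x.
Proof.
rewrite /NRS; apply: le_trans (ler_norm_sum _ _ _) _.
apply: (@le_trans _ _ (\sum_(k < d) sup_norm x)).
  apply: ler_sum => k _; apply: le_trans (NIFP_bound (x k) _) _; exact: le_supnorm.
by rewrite sumr_const card_ord mulr_natl.
Qed.

Lemma sum_count d (P : pred 'I_d) :
  \sum_(j < d) ((P j)%:R : R) = (count P (enum 'I_d))%:R.
Proof.
rewrite -sum1_count natr_sum big_enum_cond /= big_mkcond /=.
by rewrite [RHS]big_mkcond; apply: eq_bigr => j _; case: (P j).
Qed.

Lemma part1 delta d (x : 'I_d -> R) (r : nat) : 0 < delta ->
  (forall k, 0 <= x k <= 1) ->
  (forall j k, j != k -> delta <= `|x j - x k| \/ (x j = 0 /\ x k = 0)) ->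
  (1 <= r <= d)%N ->
  \sum_(k < d) NIFP (x k) (r%:R - NRS_y delta x k) = rank_stat x r.
Proof.
move=> hd h01 hsep /andP[r1 rd].
set s := sort <=%R [seq x i | i <- enum 'I_d].
pose cnt k := count (fun j => x j < x k) (enum 'I_d).
have hy k : NRS_y delta x k = (cnt k).+1%:R.
  rewrite /NRS_y.
  have -> : \sum_(j < d) NC delta (x k) (x j) = \sum_(j < d) ((nat_of_bool (x j < x k)%R)%:R : R).
    apply: eq_bigr => j _; apply: NC_eval => //.
    case: (eqVneq k j) => [->|kj]; first by left.
    by case: (hsep k j kj) => [h|[-> ->]]; [right | left].
  by rewrite sum_count -natr1 addrC.
have hsz : size s = d by rewrite size_sort size_map size_enum_ord.
have hperm : perm_eq s [seq x i | i <- enum 'I_d] by rewrite perm_sort perm_refl.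
have hcnt v : count (fun y => y < v) s = count (fun j => x j < v) (enum 'I_d).
  by rewrite (permP hperm) count_map.
have hc1 k : x k != 0 -> count_mem (x k) s = 1%N.
  move=> nz; rewrite (permP hperm) count_map.
  have -> : count (preim x (pred1 (x k))) (enum 'I_d) = count_mem k (enum 'I_d).
    apply: eq_count => j /=; case: (eqVneq j k) => [->|jk]; first by rewrite !eqxx.
    apply/negbTE/eqP => e; case: (hsep j k jk) => [h|[_ h]].
      by move: h; rewrite e subrr normr0 leNgt hd.
    by rewrite h eqxx in nz.
  by rewrite count_uniq_mem ?enum_uniq // mem_enum.
have so : sorted <=%R s by apply: sort_sorted; exact: le_total.
have hnth k : x k != 0 -> nth 0 s (cnt k) = x k.
  move=> nz.
  have mk : x k \in s by rewrite (perm_mem hperm); apply: map_f; rewrite mem_enum.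
  have := @lemA s (index (x k) s) so; rewrite index_mem nth_index // => /(_ mk (hc1 k nz)).
  by move=> h; rewrite /cnt -hcnt h nth_index.
rewrite /rank_stat -/s.
move: r1 rd; case: r => [//|m] _ rd /=.
have -> : \sum_(k < d) NIFP (x k) (m.+1%:R - NRS_y delta x k) =
          \sum_(k < d) (if (cnt k == m) && (x k != 0) then x k else 0).
  apply: eq_bigr => k _; rewrite hy NIFP_nat // eqSS eq_sym.
  by case: (cnt k == m) => //; case: (eqVneq (x k) 0).
case: (pickP (fun k => (cnt k == m) && (x k != 0))) => [k /andP[hk nz] | hnone].
  rewrite (bigD1 k) /= ?hk ?nz // big1 ?addr0.
    by rewrite -(eqP hk) hnth.
  move=> k' k'k; case: ifP => // /andP[hk' nz'].
  have e : x k' = x k by rewrite -hnth // (eqP hk') -(eqP hk) hnth.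
  case: (hsep k' k k'k) => [h|[h _]].
    by move: h; rewrite e subrr normr0 leNgt hd.
  by rewrite h eqxx in nz'.
rewrite big1; last by move=> k _; rewrite hnone.
apply/esym/eqP; apply: contraT => nz.
have ms : (m < size s)%N by rewrite hsz.
have := mem_nth 0 ms; rewrite (perm_mem hperm) => /mapP [k _ ek].
have := @lemA s m so ms; rewrite ek (hc1 k) -?ek // => /(_ erefl).
rewrite ek hcnt => hk.
have hk2 : cnt k = m by exact: hk.
by move: (hnone k); rewrite /= hk2 eqxx -ek nz.
Qed.
End H.

Section Net.
Variable R : realFieldType.
Variables (delta : R) (d p : nat).

Definition T1 : finType := ((('I_d * 'I_d * bool) + ('I_d * bool)) + ('I_p * bool))%type.
Definition T2 : finType := ('I_p * 'I_d * bool * bool)%type.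
Definition n1 := #|{: T1}|.
Definition n2 := #|{: T2}|.
Definition ev1 (u : 'I_n1) : T1 := enum_val u.
Definition ev2 (u : 'I_n2) : T2 := enum_val u.

Lemma card_n : (maxn n1 n2 <= maxn (2 * d ^ 2 + 2 * d + 2 * p) (4 * p * d))%N.
Proof.
rewrite /n1 /n2 /T1 /T2 !card_sum !card_prod !card_ord card_bool.
have -> : (d ^ 2 = d * d)%N by rewrite expnS expn1.
lia.
Qed.

Lemma sum_ev1 (F : T1 -> R) : \sum_(u < n1) F (ev1 u) = \sum_(t : T1) F t.
Proof. by rewrite /ev1 -big_enum_val. Qed.
Lemma sum_ev2 (F : T2 -> R) : \sum_(u < n2) F (ev2 u) = \sum_(t : T2) F t.
Proof. by rewrite /ev2 -big_enum_val. Qed.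

Lemma sum_pair (I J : finType) (F : I * J -> R) :
  \sum_(t : I * J) F t = \sum_(i : I) \sum_(j : J) F (i, j).
Proof. by rewrite pair_big /=; apply: eq_bigr => -[i j]. Qed.

Lemma sum_T1 (F : T1 -> R) : \sum_(t : T1) F t =
  \sum_(k < d) \sum_(j < d) (F (inl (inl (k, j, true))) + F (inl (inl (k, j, false))))
  + \sum_(k < d) (F (inl (inr (k, true))) + F (inl (inr (k, false))))
  + \sum_(i < p) (F (inr (i, true)) + F (inr (i, false))).
Proof.
rewrite /T1 !big_sumType /= !sum_pair.
congr (_ + _ + _).
- apply: eq_bigr => k _; apply: eq_bigr => j _; exact: big_bool.
- apply: eq_bigr => k _; exact: big_bool.
- apply: eq_bigr => k _; exact: big_bool.
Qed.

Lemma sum_T2 (F : T2 -> R) : \sum_(t : T2) F t =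
  \sum_(i < p) \sum_(k < d) (F (i, k, true, true) + F (i, k, true, false)
     + F (i, k, false, true) + F (i, k, false, false)).
Proof.
rewrite /T2 !sum_pair; apply: eq_bigr => i _; apply: eq_bigr => k _.
rewrite !big_bool /=; ring.
Qed.

Lemma sum_if1 n (k : 'I_n) (c : R) (F : 'I_n -> R) :
  \sum_(j < n) (if k == j then c else 0) * F j = c * F k.
Proof.
rewrite (bigD1 k) //= eqxx big1 ?addr0 // => j /negbTE.
by rewrite eq_sym => ->; rewrite mul0r.
Qed.

Definition sg (b : bool) : R := if b then -1 else 1.

Definition fA (t : T1) (j : 'I_d) : R :=
  match t with
  | inl (inl (k, j', _)) => (if k == j then delta^-1 else 0) - (if j' == j then delta^-1 else 0)
  | inl (inr (k, b)) => if k == j then sg b else 0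
  | inr _ => 0
  end.
Definition fB (t : T1) (i' : 'I_p) : R :=
  match t with
  | inr (i, b) => if i == i' then sg b else 0
  | _ => 0
  end.
Definition g1 (t : T1) : R :=
  match t with
  | inl (inl (_, _, b)) => if b then -1 else 0
  | inl (inr _) => 0
  | inr (_, b) => - sg b
  end.
Definition f2 (t' : T2) (t : T1) : R :=
  let: (i, k, a, c) := t' in
  match t with
  | inl (inl (k', _, b)) => if k' == k then - sg b else 0
  | inl (inr (k', b)) => if a && (k' == k) then sg b else 0
  | inr (i', b) => if i' == i then sg b else 0
  end.
Definition g2 (t' : T2) : R := let: (_, _, _, c) := t' in if c then -1 else 0.
Definition f3 (i : 'I_p) (t' : T2) : R :=
  let: (i', _, a, c) := t' in if i' == i then (if a != c then 1 else -1) else 0.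

Definition W1 : 'M[R]_(n1, d + p) :=
  row_mx (\matrix_(u, j) fA (ev1 u) j) (\matrix_(u, j) fB (ev1 u) j).
Definition b1 : 'cV[R]_n1 := \col_u g1 (ev1 u).
Definition W2 : 'M[R]_(n2, n1) := \matrix_(v, u) f2 (ev2 v) (ev1 u).
Definition b2 : 'cV[R]_n2 := \col_v g2 (ev2 v).
Definition W3 : 'M[R]_(p, n2) := \matrix_(i, v) f3 i (ev2 v).
Definition b3 : 'cV[R]_p := 0.

Section Eval.
Variables (x : 'I_d -> R) (r : 'I_p -> R).
Hypothesis hd : 0 < delta.

Definition P1 (t : T1) : R :=
  match t with
  | inl (inl (k, j, b)) => if b then (x k - x j - delta) / delta else (x k - x j) / delta
  | inl (inr (k, b)) => sg b * x k
  | inr (i, b) => sg b * (r i - 1)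
  end.

Lemma L1 u : (W1 *m net_input x r + b1) u 0 = P1 (ev1 u).
Proof.
rewrite /net_input /W1 mul_row_col !mxE.
under eq_bigr do rewrite !mxE.
under [X in _ + X + _ = _]eq_bigr do rewrite !mxE.
have z0 (n : nat) (F : 'I_n -> R) : \sum_(i < n) 0 * F i = 0.
  by rewrite big1 // => i _; rewrite mul0r.
case: (ev1 u) => [[[[k j'] b]|[k b]]|[i b]] /=; rewrite z0.
- rewrite (eq_bigr _ (fun i _ => mulrBl _ _ _)) sumrB !sum_if1.
  by case: b; field; rewrite gt_eqF.
- by rewrite (sum_if1 _ k (sg b) x) !addr0.
- rewrite (sum_if1 _ i (sg b) r) /sg; case: b; ring.
Qed.

Definition Q (t' : T2) : R := \sum_(t : T1) f2 t' t * relu (P1 t) + g2 t'.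

Lemma L2 v : (W2 *m reluv (W1 *m net_input x r + b1) + b2) v 0 = Q (ev2 v).
Proof.
rewrite /reluv mxE [(W2 *m _) _ _]mxE [b2 _ _]mxE.
under eq_bigr => u _ do rewrite [W2 _ _]mxE [map_mx _ _ _ _]mxE L1.
by rewrite (sum_ev1 (fun t => f2 (ev2 v) t * relu (P1 t))).
Qed.

Lemma Q_eval i k a c : Q (i, k, a, c) =
  (if a then x k else 0) + (r i - NRS_y delta x k) - (if c then 1 else 0).
Proof.
rewrite /Q sum_T1 /=.
set SA := \sum_(k0 < d) \sum_(j < d) _.
set SB := \sum_(k0 < d) _.
set SC := \sum_(i0 < p) _.
have -> : SA = - \sum_(j < d) NC delta (x k) (x j).
  rewrite /SA (bigD1 k) //= eqxx [X in _ + X]big1 ?addr0; last first.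
    by move=> k' /negbTE ->; apply: big1 => j _; rewrite !mul0r addr0.
  rewrite -sumrN; apply: eq_bigr => j _; rewrite /NC; ring.
have -> : SB = if a then x k else 0.
  rewrite /SB; clear SB; rewrite (bigD1 k) //= eqxx andbT [X in _ + X]big1 ?addr0; last first.
    by move=> k' /negbTE ->; rewrite andbF !mul0r addr0.
  case: a; last by rewrite !mul0r addr0.
  by rewrite !mulN1r !mul1r addrC relu_split.
have -> : SC = r i - 1.
  rewrite /SC (bigD1 i) //= eqxx [X in _ + X]big1 ?addr0; last first.
    by move=> i' /negbTE ->; rewrite !mul0r addr0.
  by rewrite !mulN1r !mul1r addrC relu_split.
clear SA SB SC; rewrite /NRS_y; case: a; case: c; ring.
Qed.

Lemma L3 i : net2 W1 b1 W2 b2 W3 b3 (net_input x r) i 0 = NRS delta x r i.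
Proof.
rewrite /net2 mxE /b3 [(0 : 'cV[R]_p) _ _]mxE addr0 mxE.
under eq_bigr => v _ do rewrite [W3 _ _]mxE {1}/reluv [map_mx _ _ _ _]mxE L2.
rewrite (sum_ev2 (fun t => f3 i t * relu (Q t))) sum_T2 /=.
rewrite (bigD1 i) //= eqxx [X in _ + X]big1 ?addr0; last first.
  move=> i' /negbTE ->; apply: big1 => k _; rewrite !mul0r !addr0 //.
rewrite /NRS; apply: eq_bigr => k _; rewrite !Q_eval /NIFP.
rewrite !subr0 !add0r; ring.
Qed.
End Eval.

Lemma bounds (hd : 0 < delta) :
  mx_bounded (Num.max 1 delta^-1) W1 /\ mx_bounded (Num.max 1 delta^-1) b1 /\
  mx_bounded (Num.max 1 delta^-1) W2 /\ mx_bounded (Num.max 1 delta^-1) b2 /\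
  mx_bounded (Num.max 1 delta^-1) W3 /\ mx_bounded (Num.max 1 delta^-1) b3.
Proof.
set M := Num.max 1 delta^-1.
have h1 : 1 <= M by rewrite le_max lexx.
have h0 : 0 <= M by apply: le_trans h1; exact: ler01.
have hI : `|delta^-1| <= M by rewrite gtr0_norm ?invr_gt0 // le_max lexx orbT.
have hsg b : `|sg b| <= M by rewrite /sg; case: b; rewrite ?normrN normr1.
have hsgN b : `|- sg b| <= M by rewrite normrN.
have hm1 : `|-1 : R| <= M by rewrite normrN normr1.
have hz : `|0 : R| <= M by rewrite normr0.
have hp1 : `|1 : R| <= M by rewrite normr1.
split.
  move=> u j; rewrite /W1 mxE; case: split => j'; rewrite mxE.
    case: (ev1 u) => [[[[k j''] b]|[k b]]|[i b]] /=; rewrite ?hz //.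
      by case: ifP => _; case: ifP => _; rewrite ?subrr ?subr0 ?sub0r ?normrN.
    by case: ifP => _.
  case: (ev1 u) => [[[[k j''] b]|[k b]]|[i b]] /=; rewrite ?hz //.
  by case: ifP => _.
split.
  move=> u j; rewrite /b1 mxE.
  by case: (ev1 u) => [[[[k j''] b]|[k b]]|[i b]] /=; try case: ifP => _.
split.
  move=> v u; rewrite /W2 mxE.
  case: (ev2 v) => [[[i k] a] c]; case: (ev1 u) => [[[[k' j''] b]|[k' b]]|[i' b]] /=;
  by case: ifP => _.
split.
  move=> v j; rewrite /b2 mxE.
  by case: (ev2 v) => [[[i k] a] c] /=; case: ifP => _.
split.
  move=> i v; rewrite /W3 mxE.
  by case: (ev2 v) => [[[i' k] a] c] /=; case: ifP => _ //; case: ifP => _.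
by move=> i j; rewrite /b3 mxE.
Qed.
End Net.

Theorem lemmaG13 (R : realFieldType) (delta : R) (d p : nat) :
  0 < delta -> (0 < d)%N -> (0 < p)%N ->
  (* correctness on separated inputs *)
  (forall (x : 'I_d -> R) (r : 'I_p -> nat),
     (forall k, 0 <= x k <= 1) ->
     (forall j k, j != k -> delta <= `|x j - x k| \/ (x j = 0 /\ x k = 0)) ->
     (forall i, (1 <= r i <= d)%N) ->
     forall i, NRS delta x (fun i => (r i)%:R) i = rank_stat x (r i))
  /\
  (* magnitude bound for arbitrary inputs *)
  (forall (x : 'I_d -> R) (r : 'I_p -> R) (i : 'I_p),
     `|NRS delta x r i| <= d%:R * sup_norm x)
  /\
  (* realization as a 2-hidden-layer ReLU network *)
  (exists (n1 n2 : nat)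
          (W1 : 'M[R]_(n1, d + p)) (b1 : 'cV[R]_n1)
          (W2 : 'M[R]_(n2, n1)) (b2 : 'cV[R]_n2)
          (W3 : 'M[R]_(p, n2)) (b3 : 'cV[R]_p),
     (maxn n1 n2 <= maxn (2 * d ^ 2 + 2 * d + 2 * p) (4 * p * d))%N /\
     mx_bounded (Num.max 1 delta^-1) W1 /\ mx_bounded (Num.max 1 delta^-1) b1 /\
     mx_bounded (Num.max 1 delta^-1) W2 /\ mx_bounded (Num.max 1 delta^-1) b2 /\
     mx_bounded (Num.max 1 delta^-1) W3 /\ mx_bounded (Num.max 1 delta^-1) b3 /\
     forall (x : 'I_d -> R) (r : 'I_p -> R) (i : 'I_p),
       net2 W1 b1 W2 b2 W3 b3 (net_input x r) i 0 = NRS delta x r i).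
Proof.
move=> hd _ _; split.
  move=> x r h01 hsep hr i; rewrite /NRS; exact: part1.
split; first by move=> x r i; exact: NRS_bound.
exists (n1 d p), (n2 d p), (W1 R delta d p), (b1 R d p), (W2 R d p), (b2 R d p), (W3 R d p), (b3 R p).
split; first exact: card_n.
have [? [? [? [? [? ?]]]]] := bounds R delta d p hd.
do 6! (split => //).
by move=> x r i; exact: L3.
Qed.
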